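(* Let $G=(\mathcal{S},\mathcal{A})$ be a finite directed acyclic graph with a unique state $s_0\in\mathcal{S}$ having no incoming edges, and let $\mathcal{X}\subseteq\mathcal{S}$ be the set of states with no outgoing edges (terminal states), so that every $s\in\mathcal{S}\setminus\mathcal{X}$ has at least one child. Let $R:\mathcal{X}\to(0,\infty)$ be a reward function. Let $F:\mathcal{S}\to(0,\infty)$ be a state flow function, and for each non-terminal state $s\in\mathcal{S}\setminus\mathcal{X}$ let $A(\cdot\mid s)$ be a probability distribution on the children of $s$, i.e. $A(s'\mid s)\ge 0$ for $(s\to s')\in\mathcal{A}$ and $\sum_{s':(s\to s')\in\mathcal{A}}A(s'\mid s)=1$. Define, for every state $s'\neq s_0$, the Bifurcated GFlowNet loss $$\mathcal{L}_{\mathrm{BN}}(s')=\Big(\log\sum_{s:(s\to s')\in\mathcal{A}}F(s)A(s'\mid s)-\log T(s')\Big)^2,$$ where $T(s')=F(s')$ if $s'\notin\mathcal{X}$ and $T(s')=R(s')$ if $s'\in\mathcal{X}$. Suppose $\mathcal{L}_{\mathrm{BN}}(s')=0$ for all states $s'\neq s_0$. Then, for the Markov chain that starts at $s_0$ and, at each non-terminal state $s$, moves to a child $s'$ with probability $A(s'\mid s)$ until it reaches a terminal state, the probability of terminating at $x\in\mathcal{X}$ equals $R(x)/\sum_{y\in\mathcal{X}}R(y)$; that is, the policy $A$ samples terminal states proportionally to the reward.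
   Context: Here $(s\to s')\in\mathcal{A}$ denotes a directed edge (action) from $s$ to $s'$; $s$ is then a parent of $s'$ and $s'$ a child of $s$. The quantity $F(s)A(s'\mid s)$ is interpreted as the edge flow $F(s\to s')$, so the loss condition says that the total inflow into each non-initial, non-terminal state equals its state flow, and the total inflow into each terminal state equals its reward. *)

(* Defs.v *)
From HB Require Import structures.
From mathcomp Require Import all_boot all_order all_algebra.
From mathcomp Require Import all_classical all_reals all_analysis.
Set Implicit Arguments. Unset Strict Implicit. Unset Printing Implicit Defensive.
Import Order.TTheory GRing.Theory Num.Theory.
Local Open Scope ring_scope.

Section GFN.
Variables (R : realType) (S : finType).

Definition terminal (E : rel S) (s : S) : bool := [forall t, ~~ E s t].

Definition no_incoming (E : rel S) (s : S) : bool := [forall t, ~~ E t s].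

Definition acyclic (E : rel S) : Prop := forall s t, E s t -> ~~ connect E t s.

Definition inflow (E : rel S) (F : S -> R) (A : S -> S -> R) (s' : S) : R :=
  \sum_(s | E s s') F s * A s s'.

Definition target (E : rel S) (F Rw : S -> R) (s' : S) : R :=
  if terminal E s' then Rw s' else F s'.

Definition BN_loss (E : rel S) (F Rw : S -> R) (A : S -> S -> R) (s' : S) : R :=
  (ln (inflow E F A s') - ln (target E F Rw s')) ^+ 2.

(* Transition kernel of the Markov chain; terminal states are absorbing. *)
Definition step (E : rel S) (A : S -> S -> R) (s t : S) : R :=
  if terminal E s then (s == t)%:R else if E s t then A s t else 0.

Fixpoint chain_dist (E : rel S) (A : S -> S -> R) (s0 : S) (n : nat) : S -> R :=
  match n with
  | 0 => fun t => (t == s0)%:R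
  | n'.+1 => fun t => \sum_s chain_dist E A s0 n' s * step E A s t
  end.

End GFN.

(* Main.v *)
Require Import Defs.
From HB Require Import structures.
From mathcomp Require Import all_boot all_order all_algebra.
From mathcomp Require Import all_classical all_reals all_analysis.
Import Order.TTheory GRing.Theory Num.Theory.
Import numFieldNormedType.Exports.
Local Open Scope classical_set_scope.
Local Open Scope ring_scope.

Theorem theorem4p1 (R : realType) (S : finType) (E : rel S) (s0 : S)
    (Rw F : S -> R) (A : S -> S -> R)
    (Hacyc : acyclic E)
    (Hsrc : forall s, no_incoming E s = (s == s0))
    (HR : forall x, terminal E x -> 0 < Rw x)
    (HF : forall s, 0 < F s)
    (HA0 : forall s s', E s s' -> 0 <= A s s')
    (HA1 : forall s, ~~ terminal E s -> \sum_(s' | E s s') A s s' = 1)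
    (Hloss : forall s', s' != s0 ->
       0 < inflow E F A s' /\ BN_loss E F Rw A s' = 0) :
  forall x, terminal E x ->
    (fun n => chain_dist E A s0 n x) @ \oo
      --> Rw x / \sum_(y | terminal E y) Rw y.
Proof.
move=> x Hx.
set P := chain_dist E A s0.
pose rank t := #|finset (fun u => connect E u t)|.
have termE : forall s t, terminal E s -> E s t = false.
  by move=> s t /forallP /(_ t) /negbTE.
have rk : forall s t, E s t -> (rank s < rank t)%N.
  move=> s t Est; apply: proper_card; apply/properP; split.
    apply/fintype.subsetP => u. rewrite !finset.in_set => Hu.
    exact: connect_trans Hu (connect1 Est).
  by exists t; rewrite !finset.in_set ?connect0 //; apply: Hacyc.
have rk1 : forall t, (0 < rank t)%N.
  by move=> t; apply/card_gt0P; exists t; rewrite finset.in_set connect0.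
have rkN : forall t, (rank t <= #|S|)%N by move=> t; apply: max_card.
have Hin : forall t, t != s0 -> inflow E F A t = target E F Rw t.
  move=> t Ht; have [H1 H2] := Hloss t Ht.
  move: H2; rewrite /BN_loss => /eqP; rewrite sqrf_eq0 subr_eq0 => /eqP.
  apply: ln_inj; rewrite ?posrE //.
  rewrite /target; case: ifP => // /HR //.
have PS : forall n t, P n.+1 t = \sum_s P n s * step E A s t by [].
have stepN : forall s t, ~~ terminal E t -> step E A s t = if E s t then A s t else 0.
  move=> s t Ht; rewrite /step; case: ifP => // Hs.
  rewrite termE //; case: eqP => // Est; by rewrite -Est Hs in Ht.
have stepT : forall s t, terminal E t ->
    step E A s t = (s == t)%:R + (if E s t then A s t else 0).
  move=> s t Ht; rewrite /step; case: ifP => Hs.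
    by rewrite termE // addr0.
  case: eqP => [Est|_]; first by rewrite Est Ht in Hs.
  by rewrite add0r.
have PN : forall n t, ~~ terminal E t -> P n.+1 t = \sum_(s | E s t) P n s * A s t.
  move=> n t Ht; rewrite PS [RHS]big_mkcond; apply: eq_bigr => s _.
  by rewrite stepN //; case: ifP; rewrite ?mulr0.
have PT : forall n t, terminal E t ->
    P n.+1 t = P n t + \sum_(s | E s t) P n s * A s t.
  move=> n t Ht; rewrite PS.
  under eq_bigr => s _ do rewrite stepT // mulrDr.
  rewrite big_split /=; congr (_ + _).
    rewrite (bigD1 t) //= eqxx mulr1 big1 ?addr0 // => s /negbTE ->.
    by rewrite mulr0.
  rewrite [RHS]big_mkcond; apply: eq_bigr => s _.
  by case: ifP; rewrite ?mulr0.
have zero : forall n t, ~~ terminal E t -> (rank t <= n)%N -> P n t = 0.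
  elim=> [|n IH] t Ht Hr; first by move: (rk1 t); rewrite ltnNge Hr.
  rewrite PN // big1 // => s Est.
  rewrite IH ?mul0r //.
    by apply/negP => /(termE _ t); rewrite Est.
  exact: leq_trans (rk _ _ Est) Hr.
pose N := #|S|.
have tail : forall n t, ~~ terminal E t -> (N <= n)%N ->
    \sum_(0 <= k < n) P k t = \sum_(0 <= k < N) P k t.
  move=> n t Ht HN; rewrite (big_cat_nat (leq0n N) HN) /=.
  rewrite [X in _ + X](_ : _ = 0) ?addr0 //.
  rewrite big_nat_cond big1 // => k /andP[/andP[Hk _] _].
  by apply: zero => //; apply: leq_trans (rkN t) Hk.
have noin : forall s, E s s0 = false.
  by move=> s; have := Hsrc s0; rewrite eqxx => /forallP /(_ s) /negbTE.
have P0 : forall t, P 0 t = (t == s0)%:R by [].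
case: (boolP (terminal E s0)) => Hs0.
  have all0 : forall m t, (rank t < m)%N -> t = s0.
    elim=> [|m IH] t; first by [].
    move=> Hr; case: (eqVneq t s0) => // Hne.
    have := Hsrc t; rewrite (negbTE Hne) => /negbT /forallPn [s].
    rewrite negbK => Est.
    have Hs := IH s (leq_trans (rk _ _ Est) Hr).
    by rewrite Hs termE in Est.
  have alls : forall t, t = s0 by move=> t; exact: (all0 _ t (ltnSn _)).
  rewrite (alls x).
  have Pn : forall n, P n s0 = 1.
    elim=> [|n IH]; first by rewrite P0 eqxx.
    rewrite PS (bigD1 s0) //= big1 ?addr0.
      by rewrite IH mul1r /step Hs0 eqxx.
    by move=> s; rewrite (alls s) eqxx.
  rewrite (bigD1 s0) //= big1 ?addr0; last by move=> s; rewrite (alls s) eqxx andbF.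
  rewrite divff; last by have := HR _ Hs0; rewrite lt0r => /andP[].
  apply: cvg_near_cst; near=> n; exact: Pn.
have F0 : F s0 != 0 by have := HF s0; rewrite lt0r => /andP[].
pose Occ t := \sum_(0 <= k < N) P k t.
have nte : forall s t, E s t -> ~~ terminal E s.
  by move=> s t Est; apply/negP => /(termE _ t); rewrite Est.
have Occ_val : forall m t, (rank t < m)%N -> ~~ terminal E t -> Occ t = F t / F s0.
  elim=> [|m IH] t //= Hr Ht.
  case: (eqVneq t s0) => [->|Hne].
    rewrite /Occ -(tail N.+1) ?leqnSn // big_nat_recl //= P0 eqxx.
    rewrite big1 ?addr0 ?divff // => k _.
    by rewrite PN // big_pred0 // => s; rewrite noin.
  have Hf : F t = inflow E F A t by rewrite Hin // /target (negbTE Ht).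
  rewrite /Occ -(tail N.+1) ?leqnSn // big_nat_recl //= P0 (negbTE Hne) add0r.
  under eq_bigr => k _ do rewrite PN //.
  rewrite exchange_big /= Hf /inflow mulr_suml; apply: eq_bigr => s Est.
  rewrite -mulr_suml -/(Occ s).
  rewrite IH ?(nte _ _ Est) //; last exact: leq_trans (rk _ _ Est) Hr.
  by rewrite mulrAC.
have OccV : forall t, ~~ terminal E t -> Occ t = F t / F s0.
  by move=> t; apply: (Occ_val (rank t).+1).
have PTn : forall y, terminal E y -> forall n,
    P n y = \sum_(s | E s y) A s y * \sum_(0 <= k < n) P k s.
  move=> y Hy; have Hne : y != s0 by apply: contraNneq Hs0 => <-.
  elim=> [|n IH].
    by rewrite P0 (negbTE Hne) big1 // => s _; rewrite big_geq ?mulr0.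
  rewrite PT // IH -big_split /=; apply: eq_bigr => s _.
  by rewrite big_nat_recr //= mulrDr [P n s * _]mulrC.
have Pval : forall y, terminal E y -> forall n, (N <= n)%N -> P n y = Rw y / F s0.
  move=> y Hy n Hn; have Hne : y != s0 by apply: contraNneq Hs0 => <-.
  rewrite PTn //.
  have -> : Rw y = inflow E F A y by rewrite Hin // /target Hy.
  rewrite /inflow mulr_suml; apply: eq_bigr => s Est.
  rewrite tail ?(nte _ _ Est) // -/(Occ s) OccV ?(nte _ _ Est) //.
  by rewrite mulrA [A s y * F s]mulrC.
have stoch : forall s, \sum_t step E A s t = 1.
  move=> s; rewrite /step; case: (boolP (terminal E s)) => Hs.
    by rewrite (bigD1 s) //= eqxx big1 ?addr0 // => t; rewrite eq_sym => /negbTE ->.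
  by rewrite -big_mkcond HA1.
have sum1 : forall n, \sum_t P n t = 1.
  elim=> [|n IH].
    by rewrite (bigD1 s0) //= P0 eqxx big1 ?addr0 // => t /negbTE; rewrite P0 => ->.
  rewrite /P /=; rewrite exchange_big /=.
  under eq_bigr => s _ do rewrite -mulr_sumr stoch mulr1.
  exact: IH.
have sumR : \sum_(y | terminal E y) Rw y = F s0.
  have := sum1 N; rewrite (bigID (terminal E)) /=.
  rewrite [X in _ + X]big1 ?addr0; last by move=> t Ht; apply: zero.
  under eq_bigr => z Hz do rewrite Pval //.
  rewrite -mulr_suml => /(congr1 (fun u => u * F s0)); rewrite mulfVK // mul1r.
  by []. rewrite sumR; apply: cvg_near_cst; near=> n; apply: Pval => //.
near: n; exists N => //.
Unshelve. all: by end_near.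
Qed.
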